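(* Let $S\in\mathrm{Sp}(2n,\mathbb R)$ with largest singular value $e^{s}$, let $\bm f\in\mathbb Z_{\ge0}^n$ with $f_{\max}=\max_if_i$, and let $M=S\,\mathrm{diag}(D,D)\,S^T$ where $D=\mathrm{diag}(\tfrac12+f_1,\dots,\tfrac12+f_n)$ (the covariance matrix of $\mathcal U_S|\bm f\rangle$). Let $\varepsilon\ge0$ and let $F$ be a real symmetric matrix with $\|F\|\le1$ such that $M'=M+\varepsilon F$ is a valid covariance matrix. If $R'\in\mathrm{Sp}(2n,\mathbb R)$ satisfies $M'=R'\,\mathrm{diag}(D',D')\,R'^T$ for a diagonal matrix $D'$ with positive entries, then $$\|R'\|=\|R'^{-1}\|\le\sqrt{e^{2s}(1+2f_{\max})+2\varepsilon}.$$
   Context: $\mathrm{Sp}(2n,\mathbb R)=\{S\in\mathbb R^{2n\times2n}: S\Omega S^T=\Omega\}$ with $\Omega=\begin{pmatrix}0&I\\-I&0\end{pmatrix}$. A valid covariance matrix is a real symmetric positive-definite $2n\times 2n$ matrix all of whose symplectic eigenvalues are $\ge 1/2$ (the symplectic eigenvalues of $M$ are the $\nu_i>0$ with $M=R\,\mathrm{diag}(\nu,\nu)R^T$ for some $R\in\mathrm{Sp}(2n,\mathbb R)$, by Williamson's theorem). $\|\cdot\|$ is the operator norm. *)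

(* Defs.v *)
From HB Require Import structures.
From mathcomp Require Import all_boot all_order all_algebra.
From mathcomp Require Import all_classical all_reals.
From mathcomp Require Import sequences exp.
Set Implicit Arguments. Unset Strict Implicit. Unset Printing Implicit Defensive.
Import Order.TTheory GRing.Theory Num.Theory.
Local Open Scope ring_scope.

(* Matrices of size 2n are represented as 'M[R]_(n + n), with the
   first n coordinates being the "x" block and the last n the "p" block. *)

Definition Omega (R : realType) (n : nat) : 'M[R]_(n + n) :=
  block_mx 0 1%:M (- 1%:M) 0.

Definition symplectic (R : realType) (n : nat) (S : 'M[R]_(n + n)) : Prop :=
  S *m Omega R n *m S^T = Omega R n.

Definition diag2 (R : realType) (n : nat) (d : 'rV[R]_n) : 'M[R]_(n + n) :=
  block_mx (diag_mx d) 0 0 (diag_mx d).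

Definition vnorm (R : realType) (m : nat) (x : 'cV[R]_m) : R :=
  Num.sqrt (\sum_i x i 0 ^+ 2).

Definition opnorm (R : realType) (m k : nat) (A : 'M[R]_(m, k)) : R :=
  sup [set vnorm (A *m x) | x in [set x : 'cV[R]_k | vnorm x <= 1]]%classic.

Definition posdef (R : realType) (m : nat) (M : 'M[R]_m) : Prop :=
  forall x : 'cV[R]_m, x != 0 -> 0 < (x^T *m M *m x) 0 0.

(* Symplectic eigenvalues: the nu_i > 0 with M = R diag(nu,nu) R^T, R symplectic
   (Williamson). A valid covariance matrix is real symmetric positive definite
   with all symplectic eigenvalues >= 1/2. *)
Definition symplectic_eigenvalue (R : realType) (n : nat) (M : 'M[R]_(n + n))
    (v : R) : Prop :=
  exists (Rm : 'M[R]_(n + n)) (nu : 'rV[R]_n) (i : 'I_n),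
    symplectic Rm /\ (forall j, 0 < nu 0 j) /\
    M = Rm *m diag2 nu *m Rm^T /\ v = nu 0 i.

Definition valid_cov (R : realType) (n : nat) (M : 'M[R]_(n + n)) : Prop :=
  M^T = M /\ posdef M /\
  (forall v, symplectic_eigenvalue M v -> 2^-1 <= v).

(* Main.v *)
Require Import Defs.
From HB Require Import structures.
From mathcomp Require Import all_boot all_order all_algebra.
From mathcomp Require Import all_classical all_reals.
From mathcomp Require Import sequences exp.
From mathcomp Require Import ring lra.
Import Order.TTheory GRing.Theory Num.Theory.
Local Open Scope ring_scope.
Set Implicit Arguments. Unset Strict Implicit.

Section S.
Variable R : realType.

Definition sq m (v : 'cV[R]_m) : R := (v^T *m v) 0 0.
Definition qf m (A : 'M[R]_m) (v : 'cV[R]_m) : R := (v^T *m A *m v) 0 0.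

Lemma sqE m (v : 'cV[R]_m) : sq v = \sum_i v i 0 ^+ 2.
Proof. rewrite /sq mxE; apply: eq_bigr => i _; by rewrite mxE expr2. Qed.

Lemma sq_ge0 m (v : 'cV[R]_m) : 0 <= sq v.
Proof. rewrite sqE; apply: sumr_ge0 => i _; exact: sqr_ge0. Qed.

Lemma vnormE m (v : 'cV[R]_m) : vnorm v = Num.sqrt (sq v).
Proof. by rewrite sqE. Qed.

Lemma vnorm_ge0 m (v : 'cV[R]_m) : 0 <= vnorm v.
Proof. exact: sqrtr_ge0. Qed.

Lemma vnorm_sq m (v : 'cV[R]_m) : vnorm v ^+ 2 = sq v.
Proof. by rewrite vnormE sqr_sqrtr // sq_ge0. Qed.

Lemma sq_eq0 m (v : 'cV[R]_m) : sq v = 0 -> v = 0.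
Proof.
rewrite sqE => /eqP; rewrite psumr_eq0 => [/allP H|i _]; last exact: sqr_ge0.
apply/matrixP => i j; rewrite ord1 mxE; apply/eqP.
by rewrite -sqrf_eq0; apply: (implyP (H i (mem_index_enum _))).
Qed.

Lemma vnorm0 m : vnorm (0 : 'cV[R]_m) = 0.
Proof. rewrite vnormE /sq linear0 mxE sqrtr0 //. Qed.

Lemma vnormZ m k (v : 'cV[R]_m) : vnorm (k *: v) = `|k| * vnorm v.
Proof.
have E: ((k*:v)^T *m (k*:v)) = (k*k) *: (v^T *m v).
  have ->: (k*:v)^T = k *: v^T by apply/matrixP=> i j; rewrite !mxE.
  by rewrite -scalemxAl -scalemxAr scalerA.
rewrite !vnormE /sq E mxE sqrtrM; last by rewrite -expr2 sqr_ge0.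
by rewrite -expr2 sqrtr_sqr.
Qed.

Lemma vnormN m (v : 'cV[R]_m) : vnorm (- v) = vnorm v.
Proof. by rewrite -scaleN1r vnormZ normrN normr1 mul1r. Qed.

Lemma dotC m (u v : 'cV[R]_m) : (u^T *m v) 0 0 = (v^T *m u) 0 0.
Proof. rewrite !mxE; apply: eq_bigr => i _; by rewrite !mxE mulrC. Qed.

Lemma dotE m (u v : 'cV[R]_m) : (u^T *m v) 0 0 = \sum_i u i 0 * v i 0.
Proof. rewrite mxE; apply: eq_bigr => i _; by rewrite mxE. Qed.

Lemma CS_sq (I : finType) (u v : I -> R) :
  (\sum_i u i * v i) ^+ 2 <= (\sum_i u i ^+ 2) * (\sum_i v i ^+ 2).
Proof.
set a := \sum_i u i ^+ 2; set b := \sum_i u i * v i; set c := \sum_i v i ^+ 2.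
have key t : 0 <= t ^+ 2 * a - 2 * t * b + c.
  have -> : t ^+ 2 * a - 2 * t * b + c = \sum_i (t * u i - v i) ^+ 2.
    rewrite /a /b /c mulr_sumr mulr_sumr -sumrN -!big_split /=.
    apply: eq_bigr => i _; rewrite -mulrA; lra.
  by apply: sumr_ge0 => i _; exact: sqr_ge0.
have a0 : 0 <= a by apply: sumr_ge0 => i _; exact: sqr_ge0.
have [a0e|apos] := eqVneq a 0.
  have u0 : forall i, u i = 0.
    move=> i; apply/eqP; rewrite -sqrf_eq0; apply/eqP.
    by apply: (psumr_eq0P _ a0e) => // j _; exact: sqr_ge0.
  by rewrite a0e /b /b big1 ?expr0n ?mul0r // => i _; rewrite u0 mul0r.
have ap : 0 < a by rewrite lt_def apos a0.
have := key (b / a).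
move=> H.
have : 0 <= a * (c - b ^+ 2 / a).
  apply: mulr_ge0 => //.
  suff -> : c - b ^+ 2 / a = (b / a) ^+ 2 * a - 2 * (b / a) * b + c by [].
  field; exact: apos.
rewrite mulrBr mulrCA divff // mulr1 subr_ge0 mulrC //.
Qed.

Lemma CS m (u v : 'cV[R]_m) : (u^T *m v) 0 0 <= vnorm u * vnorm v.
Proof.
rewrite dotE !vnormE !sqE -sqrtrM; last by apply: sumr_ge0 => i _; exact: sqr_ge0.
apply: le_trans (ler_norm _) _; rewrite -sqrtr_sqr; apply: ler_wsqrtr.
exact: (CS_sq (fun i => u i 0) (fun i => v i 0)).
Qed.

Lemma entry_le m (x : 'cV[R]_m) i : `|x i 0| <= vnorm x.
Proof.
rewrite -sqrtr_sqr vnormE sqE; apply: ler_wsqrtr.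
rewrite (bigD1 i) //=; apply: ler_wpDr; first by apply: sumr_ge0 => j _; exact: sqr_ge0.
by [].
Qed.

Definition bnd m k (A : 'M[R]_(m, k)) := Num.sqrt (\sum_i (\sum_j `|A i j|) ^+ 2).

Lemma bnd_ok m k (A : 'M[R]_(m, k)) x : vnorm x <= 1 -> vnorm (A *m x) <= bnd A.
Proof.
move=> Hx; rewrite /vnorm /bnd; apply: ler_wsqrtr; apply: ler_sum => i _.
have H1 : `|(A *m x) i 0| <= \sum_j `|A i j|.
  rewrite mxE; apply: le_trans (ler_norm_sum _ _ _) _; apply: ler_sum => j _.
  rewrite normrM; have := le_trans (entry_le x j) Hx; have := normr_ge0 (A i j).
  move=> ? ?; rewrite -[leRHS]mulr1; apply: ler_pM => //.
have H0 := normr_ge0 ((A *m x) i 0).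
rewrite -(real_normK (num_real _)); nra.
Qed.

Lemma opnorm_ub m k (A : 'M[R]_(m, k)) x : vnorm x <= 1 -> vnorm (A *m x) <= opnorm A.
Proof.
move=> Hx; apply: ub_le_sup; last by exists x.
by exists (bnd A) => y [z Hz <-]; exact: bnd_ok.
Qed.

Lemma opnorm_le m k (A : 'M[R]_(m, k)) c :
  (forall x, vnorm x <= 1 -> vnorm (A *m x) <= c) -> opnorm A <= c.
Proof.
move=> H; apply: ge_sup; last by move=> y [z Hz <-]; exact: H.
by exists (vnorm (A *m 0)); exists 0 => //=; rewrite vnorm0 ler01.
Qed.

Lemma opnorm_ge0 m k (A : 'M[R]_(m, k)) : 0 <= opnorm A.
Proof.
apply: le_trans (vnorm_ge0 (A *m 0)) _; apply: opnorm_ub; rewrite vnorm0 ler01 //.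
Qed.

Lemma opnorm_mul m k (A : 'M[R]_(m, k)) x : vnorm (A *m x) <= opnorm A * vnorm x.
Proof.
have [x0|xn0] := eqVneq (vnorm x) 0.
  have : x = 0.
    apply: sq_eq0; move: (x0); rewrite vnormE => /eqP; rewrite sqrtr_eq0 => H.
    by apply/eqP; rewrite eq_le H sq_ge0.
  by move=> ->; rewrite mulmx0 !vnorm0 mulr0.
have xp : 0 < vnorm x by rewrite lt_def xn0 vnorm_ge0.
set y := (vnorm x)^-1 *: x.
have Hy : vnorm y = 1 by rewrite /y vnormZ ger0_norm ?invr_ge0 ?vnorm_ge0 // mulVf.
have : A *m x = vnorm x *: (A *m y) by rewrite /y -scalemxAr scalerA divff // scale1r.
move=> ->; rewrite vnormZ ger0_norm ?vnorm_ge0 // mulrC ler_wpM2r ?vnorm_ge0 //.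
by apply: opnorm_ub; rewrite Hy.
Qed.

Lemma opnorm_tr_le m k (A : 'M[R]_(m, k)) : opnorm A^T <= opnorm A.
Proof.
apply: opnorm_le => y Hy; set z := A^T *m y.
have E : sq z = (y^T *m (A *m z)) 0 0.
  by rewrite /sq /z trmx_mul trmxK !mulmxA.
have h1 := CS y (A *m z).
have h2 := opnorm_mul A z.
have h3 := vnorm_ge0 (A *m z).
have h4 := vnorm_ge0 z.
have h5 := opnorm_ge0 A.
have h6 := vnorm_ge0 y.
have h7 : vnorm z ^+ 2 <= opnorm A * vnorm z.
  rewrite vnorm_sq E; apply: le_trans h1 _; apply: le_trans h2; nra.
nra.
Qed.

Lemma opnorm_tr m k (A : 'M[R]_(m, k)) : opnorm A^T = opnorm A.
Proof.
apply/eqP; rewrite eq_le opnorm_tr_le /=.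
by have := opnorm_tr_le A^T; rewrite trmxK.
Qed.

Lemma OmOm n : Omega R n *m Omega R n = - 1%:M.
Proof.
rewrite /Omega mulmx_block !mul0mx !mulmx0 !mul1mx !mulmx1 !add0r !addr0.
by rewrite [in RHS](scalar_mx_block n n) opp_block_mx !oppr0.
Qed.

Lemma OmT n : (Omega R n)^T = - Omega R n.
Proof.
by rewrite /Omega tr_block_mx !trmx0 trmx1 linearN /= trmx1 opp_block_mx !oppr0 opprK.
Qed.

Lemma vnormOm n (x : 'cV[R]_(n + n)) : vnorm (Omega R n *m x) = vnorm x.
Proof.
rewrite !vnormE /sq trmx_mul OmT mulmxA -(mulmxA _ _ (Omega R n)) mulNmx mulmxN OmOm.
by rewrite mulmxN mulmx1 opprK.
Qed.

Lemma opnormN m k (A : 'M[R]_(m, k)) : opnorm (- A) = opnorm A.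
Proof.
apply/eqP; rewrite eq_le; apply/andP; split; apply: opnorm_le => x Hx.
  by rewrite mulNmx vnormN; exact: opnorm_ub.
by rewrite -vnormN -mulNmx; exact: opnorm_ub.
Qed.

Lemma opnormOm_le n (A : 'M[R]_(n + n)) : opnorm (Omega R n *m A *m Omega R n) <= opnorm A.
Proof.
apply: opnorm_le => x Hx; rewrite -!mulmxA vnormOm.
apply: le_trans (opnorm_mul _ _) _; rewrite vnormOm.
by rewrite -[leRHS]mulr1; apply: ler_wpM2l => //; exact: opnorm_ge0.
Qed.

Lemma opnormOm n (A : 'M[R]_(n + n)) : opnorm (Omega R n *m A *m Omega R n) = opnorm A.
Proof.
apply/eqP; rewrite eq_le opnormOm_le /=.
have := opnormOm_le (Omega R n *m A *m Omega R n).
suff -> : Omega R n *m (Omega R n *m A *m Omega R n) *m Omega R n = A by [].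
by rewrite !mulmxA OmOm -mulmxA OmOm mulNmx mul1mx mulmxN mulmx1 opprK.
Qed.

Lemma symp_inv n (A : 'M[R]_(n + n)) : symplectic A ->
  invmx A = - (Omega R n *m A^T *m Omega R n).
Proof.
move=> hA.
have E : A *m (- (Omega R n *m A^T *m Omega R n)) = 1%:M.
  by rewrite mulmxN !mulmxA hA OmOm opprK.
have [uA _] := mulmx1_unit E.
by rewrite -[LHS]mulmx1 -E mulmxA mulVmx // mul1mx.
Qed.

Lemma row_mx_ex n (e : 'rV[R]_n) j : exists i, row_mx e e 0 j = e 0 i.
Proof.
rewrite -[j](@fintype.splitK n n); case: (fintype.split j) => k /=; [rewrite row_mxEl | rewrite row_mxEr]; by exists k.
Qed.

Lemma qf_diag2 n (e : 'rV[R]_n) (w : 'cV[R]_(n + n)) :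
  (w^T *m diag2 e *m w) 0 0 = \sum_j row_mx e e 0 j * w j 0 ^+ 2.
Proof.
rewrite /diag2 -diag_mx_row mul_mx_diag mxE; apply: eq_bigr => j _.
by rewrite !mxE expr2; ring.
Qed.
End S.
Unset Implicit Arguments.

Theorem mainTheorem8 (R : realType) (n : nat) (S : 'M[R]_(n + n)) (s : R)
  (f : 'I_n -> nat) (eps : R) (F : 'M[R]_(n + n))
  (R' : 'M[R]_(n + n)) (d' : 'rV[R]_n) :
  symplectic S ->
  expR s = opnorm S ->
  let fmax := (\max_i f i)%N in
  let d := \row_i (2^-1 + (f i)%:R : R) in
  let M := S *m diag2 d *m S^T in
  0 <= eps ->
  F^T = F ->
  opnorm F <= 1 ->
  valid_cov (M + eps *: F) ->
  symplectic R' ->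
  (forall i, 0 < d' 0 i) ->
  M + eps *: F = R' *m diag2 d' *m R'^T ->
  opnorm R' = opnorm (invmx R') /\
  opnorm R' <= Num.sqrt (expR (2 * s) * (1 + 2 * fmax%:R) + 2 * eps).
Proof.
move=> hS hs fmax d M eps0 FT hF hval hR' hd' hM.
have opR : opnorm R' = opnorm (invmx R').
  by rewrite symp_inv // opnormN opnormOm opnorm_tr.
split => //.
have hd'2 : forall i, 2^-1 <= d' 0 i.
  by move=> i; apply: hval.2.2; exists R', d', i.
have hdle : forall i, d 0 i <= 2^-1 + fmax%:R.
  by move=> i; rewrite mxE lerD2l ler_nat; exact: (leq_bigmax i).
pose c : R := 2^-1 + fmax%:R.
have hc : 0 <= c by rewrite /c addr_ge0 ?invr_ge0 ?ler0n.
pose E := expR s.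
have HE : expR (2 * s) = E ^+ 2.
  by rewrite expr2 -expRD; congr expR; lra.
rewrite -opnorm_tr; apply: opnorm_le => y Hy.
set z := R'^T *m y.
have Q1 : (y^T *m (M + eps *: F) *m y) 0 0 = (z^T *m diag2 d' *m z) 0 0.
  by rewrite hM /z trmx_mul trmxK !mulmxA.
have Q2 : (y^T *m (M + eps *: F) *m y) 0 0 =
    (y^T *m M *m y) 0 0 + eps * (y^T *m (F *m y)) 0 0.
  rewrite mulmxDr mulmxDl -scalemxAr -scalemxAl -(mulmxA _ F y) [LHS]mxE.
  by rewrite [X in _ + X = _]mxE.
have Hsqz : sq z <= 2 * (z^T *m diag2 d' *m z) 0 0.
  rewrite qf_diag2 sqE mulr_sumr; apply: ler_sum => j _.
  have [i ->] := row_mx_ex d' j.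
  have := hd'2 i; have := sqr_ge0 (z j 0); nra.
have HF : (y^T *m (F *m y)) 0 0 <= 1.
  apply: le_trans (CS _ _) _.
  have := opnorm_mul F y; have := vnorm_ge0 y; have := vnorm_ge0 (F *m y).
  have := opnorm_ge0 F; nra.
have HM : (y^T *m M *m y) 0 0 <= c * E ^+ 2.
  set w := S^T *m y.
  have -> : (y^T *m M *m y) 0 0 = (w^T *m diag2 d *m w) 0 0.
    by rewrite /M /w trmx_mul trmxK !mulmxA.
  rewrite qf_diag2.
  apply: (@le_trans _ _ (c * sq w)).
    rewrite sqE mulr_sumr; apply: ler_sum => j _.
    have [i ->] := row_mx_ex d j.
    have := hdle i; have := sqr_ge0 (w j 0); rewrite -/c; nra.
  apply: ler_wpM2l => //; rewrite -vnorm_sq.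
  have hw : vnorm w <= E.
    apply: le_trans (opnorm_mul _ _) _; rewrite opnorm_tr /E hs.
    have := vnorm_ge0 y; have := opnorm_ge0 S; nra.
  have := vnorm_ge0 w; nra.
have h2c : 2 * c = 1 + 2 * fmax%:R.
  by rewrite /c mulrDr mulfV ?pnatr_eq0.
have hepsF : eps * (y^T *m (F *m y)) 0 0 <= eps.
  by rewrite -[leRHS]mulr1; apply: ler_wpM2l.
rewrite vnormE; apply: ler_wsqrtr; rewrite HE.
have h3 : 2 * c * E ^+ 2 = E ^+ 2 * (1 + 2 * fmax%:R) by rewrite h2c mulrC.
rewrite -h3; move: Hsqz; rewrite -Q1 Q2; lra.
Qed.
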